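(* Let $2\le k\le mn$, let $p_x\in\mathcal{P}_k$, let $\mathcal{D}\subseteq\mathbb{C}$, and let $F:\mathcal{D}\rightarrow M_{m\times n}(\mathbb{C})$ be defined by $F(z)=\sum_{i=0}^{s}A_i z^i$ with $A_i\in M_{m\times n}(\mathbb{C})$. Let $\mathcal{Z}_{p_x}(\mathcal{D})=\{z\in\mathcal{D} : F(z)\text{ has repeated zeros with respect to } p_x\}$. Then either $\mathcal{Z}_{p_x}(\mathcal{D})=\mathcal{D}$ or $\mathcal{Z}_{p_x}(\mathcal{D})$ is finite.
   Context: $M_{m\times n}(\mathbb{C})$ is the set of $m\times n$ complex matrices. Let $\mathbb{C}_k[x]$ be the set of complex polynomials of degree $k$ and $\mathbb{C}^k_{\mathrm{sym}}$ the set of unordered $k$-tuples of complex numbers; $r_k:\mathbb{C}_k[x]\to\mathbb{C}^k_{\mathrm{sym}}$ sends a polynomial to the unordered $k$-tuple of its roots (with multiplicity). $\mathcal{P}_k$ is the set of maps $p_x:M_{m\times n}(\mathbb{C})\to\mathbb{C}_k[x]$ of the form $p_x(A)=x^k+\sum_{i=1}^{k}q_i(A)x^{i-1}$, where each $q_i(A)$ is a polynomial function of the entries of $A$, such that $r_k(p_x(M_{m\times n}(\mathbb{C})))=\mathbb{C}^k_{\mathrm{sym}}$. $A$ has repeated zeros with respect to $p_x$ if the polynomial $p_x(A)$ (in $x$) has a root of multiplicity at least $2$, and distinct zeros otherwise. *)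

(* Defs.v *)
(* The complex numbers are modelled as R[i] = complex R for
   an arbitrary model R : realType of the real numbers. *)
From HB Require Import structures.
From mathcomp Require Import all_boot all_order all_algebra.
From mathcomp Require Import reals.
From mathcomp Require Import complex.
From mathcomp Require mpoly.
Set Implicit Arguments. Unset Strict Implicit. Unset Printing Implicit Defensive.
Import Order.TTheory GRing.Theory Num.Theory.
Local Open Scope ring_scope.

Definition mx_polyfun (C : comNzRingType) (m n : nat) (q : 'M[C]_(m, n) -> C) : Prop :=
  exists P : mpoly.mpoly (m * n) C,
    forall A : 'M[C]_(m, n), q A = mpoly.meval (fun i => mxvec A 0 i) P.

(* r_k(p(A)) = the unordered k-tuple s (given as a sequence of size k):
   p(A) is monic of degree k with roots s counted with multiplicity,
   i.e. p(A) = prod_{a in s} (x - a). *)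
Definition roots_are (C : comNzRingType) (p : {poly C}) (s : seq C) : Prop :=
  p = \prod_(a <- s) ('X - a%:P).

Definition in_Pk (C : comNzRingType) (m n k : nat)
    (p : 'M[C]_(m, n) -> {poly C}) : Prop :=
  (exists q : 'I_k -> 'M[C]_(m, n) -> C,
      (forall i, mx_polyfun (q i)) /\
      (forall A, p A = 'X^k + \sum_(i < k) q i A *: 'X^i))
  /\ (forall s : seq C, size s = k -> exists A, roots_are (p A) s).

Definition repeated_zeros (C : idomainType) (m n : nat)
    (p : 'M[C]_(m, n) -> {poly C}) (A : 'M[C]_(m, n)) : Prop :=
  exists x : C, (('X - x%:P) ^+ 2 %| p A)%R.

Definition Zset (C : idomainType) (m n s : nat) (p : 'M[C]_(m, n) -> {poly C})
    (D : C -> Prop) (Acoef : 'I_s.+1 -> 'M[C]_(m, n)) : C -> Prop :=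
  fun z => D z /\ repeated_zeros p (\sum_(i < s.+1) z ^+ i *: Acoef i).

(* Main.v *)
From HB Require Import structures.
From mathcomp Require Import all_boot all_order all_algebra.
From mathcomp Require Import reals complex.
From mathcomp Require mpoly.
From mathcomp Require Import zify.
Require Import Defs.
Set Implicit Arguments. Unset Strict Implicit. Unset Printing Implicit Defensive.
Import Order.TTheory GRing.Theory Num.Theory.
Local Open Scope ring_scope.

Section PF.
Variable C : comNzRingType.
Definition pf (f : C -> C) := exists Q : {poly C}, forall z, f z = Q.[z].

Lemma pf_ext f g : (forall z, f z = g z) -> pf f -> pf g.
Proof. by move=> e [Q HQ]; exists Q => z; rewrite -e. Qed.
Lemma pfC c : pf (fun _ => c).
Proof. by exists c%:P => z; rewrite hornerC. Qed.
Lemma pfX : pf (fun z => z).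
Proof. by exists 'X => z; rewrite hornerX. Qed.
Lemma pfD f g : pf f -> pf g -> pf (fun z => f z + g z).
Proof. by move=> [P HP] [Q HQ]; exists (P + Q) => z; rewrite hornerD HP HQ. Qed.
Lemma pfM f g : pf f -> pf g -> pf (fun z => f z * g z).
Proof. by move=> [P HP] [Q HQ]; exists (P * Q) => z; rewrite hornerM HP HQ. Qed.
Lemma pfXn f e : pf f -> pf (fun z => f z ^+ e).
Proof.
move=> Hf; elim: e => [|e IH]; first exact: (pfC 1).
by apply: pf_ext (pfM Hf IH) => z; rewrite exprS.
Qed.
Lemma pf_sum (I : Type) (r : seq I) (P : pred I) (F : I -> C -> C) :
  (forall i, pf (F i)) -> pf (fun z => \sum_(i <- r | P i) F i z).
Proof.
move=> H; elim: r => [|a r IH].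
  by apply: pf_ext (pfC 0) => z; rewrite big_nil.
case Pa: (P a).
  by apply: pf_ext (pfD (H a) IH) => z; rewrite big_cons Pa.
by apply: pf_ext IH => z; rewrite big_cons Pa.
Qed.
Lemma pf_prod (I : Type) (r : seq I) (P : pred I) (F : I -> C -> C) :
  (forall i, pf (F i)) -> pf (fun z => \prod_(i <- r | P i) F i z).
Proof.
move=> H; elim: r => [|a r IH].
  by apply: pf_ext (pfC 1) => z; rewrite big_nil.
case Pa: (P a).
  by apply: pf_ext (pfM (H a) IH) => z; rewrite big_cons Pa.
by apply: pf_ext IH => z; rewrite big_cons Pa.
Qed.

Lemma pf_meval N (v : C -> 'I_N -> C) (P : mpoly.mpoly N C) :
  (forall i, pf (fun z => v z i)) -> pf (fun z => mpoly.meval (v z) P).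
Proof.
move=> H; apply: pf_ext; first by move=> z; rewrite mpoly.mevalE.
apply: pf_sum => mm; apply: pfM; first exact: pfC.
by apply: pf_prod => i; apply: pfXn.
Qed.

Lemma pf_entry m n s (A : 'I_s.+1 -> 'M[C]_(m, n)) (j : 'I_(m * n)) :
  pf (fun z => mxvec (\sum_(i < s.+1) z ^+ i *: A i) 0 j).
Proof.
case/mxvec_indexP: j => a b.
apply: (@pf_ext (fun z => \sum_(i < s.+1) z ^+ i * A i a b)).
  by move=> z; rewrite mxvecE summxE; apply: eq_bigr => i _; rewrite mxE.
by apply: pf_sum => i; apply: pfM; [apply: pfXn; apply: pfX | apply: pfC].
Qed.
End PF.
Lemma rep_gcd (C : closedFieldType) (f : {poly C}) : f != 0 ->
  (exists x, (('X - x%:P) ^+ 2 %| f)%R) <-> (1 < size (gcdp f f^`()))%N.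
Proof.
move=> f0; split.
  move=> [x dv]; apply: (@root_size_gt1 _ x).
    by rewrite gcdp_eq0 (negPf f0).
  case/dvdpP: dv => g eg; rewrite eg.
  rewrite root_gcd; apply/andP; split.
    by rewrite rootM root_exp_XsubC eqxx orbT.
  rewrite derivM expr2 derivM derivXsubC !mul1r /root !hornerE subrr /= !mulr0 add0r. by rewrite add0r subrr mulr0.
move=> H; have : size (gcdp f f^`()) != 1%N by rewrite neq_ltn H orbT.
case/closed_rootP=> x; rewrite root_gcd => /andP [/factor_theorem [g eg] rd].
move: rd; rewrite eg derivM derivXsubC mulr1 /root !hornerE subrr /=. rewrite mulr0 add0r => gx.
have /factor_theorem [h eh] : root g x by []. exists x.
by rewrite eh -mulrA -expr2 dvdp_mull.
Qed.

Lemma size_sumXC (C : comNzRingType) k (Q : 'I_k -> {poly C}) :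
  (size (\sum_(i < k) (Q i)%:P * 'X^i : {poly {poly C}})%R <= k)%N.
Proof.
apply: (leq_trans (size_sum _ _ _)); apply/bigmax_leqP => i _.
apply: (leq_trans (size_polyMleq _ _)); rewrite size_polyXn.
have h := size_polyC_leq1 (Q i); rewrite addnS /=; apply: leq_trans (ltn_ord i); by rewrite -add1n leq_add2r.
Qed.

Theorem theorem5p4 (R : realType) (m n k s : nat)
    (p : 'M[R[i]]_(m, n) -> {poly R[i]})
    (D : R[i] -> Prop) (Acoef : 'I_s.+1 -> 'M[R[i]]_(m, n)) :
  (2 <= k)%N -> (k <= m * n)%N -> in_Pk k p ->
  (forall z, Zset p D Acoef z <-> D z) \/
  (exists l : seq R[i], forall z, Zset p D Acoef z -> z \in l).
Proof.
move=> k2 _ [[q [Hq Hp]] _].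
set F := fun z : R[i] => \sum_(i < s.+1) z ^+ i *: Acoef i.
have pfq : forall j : 'I_k, pf (fun z => q j (F z)).
  move=> j; have [P HP] := Hq j.
  apply: (@pf_ext _ (fun z => mpoly.meval (fun l => mxvec (F z) 0 l) P)).
    by move=> z; rewrite HP.
  by apply: pf_meval => l; apply: pf_entry.
have [Q HQ] := fin_all_exists pfq.
pose Sum := \sum_(i < k) (Q i)%:P * 'X^i : {poly {poly R[i]}}.
pose G := 'X^k + Sum.
have sS := size_sumXC Q; rewrite -/Sum in sS.
have sG : size G = k.+1.
  by rewrite /G size_polyDl size_polyXn // ltnS.
have lG : lead_coef G = 1.
  by rewrite /G lead_coefDl ?lead_coefXn // size_polyXn ltnS.
have dG : G^`() = (k%:R : {poly R[i]}) *: 'X^(k.-1) + Sum^`().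
  by rewrite /G derivD derivXn scaler_nat.
have kn0 : (k%:R : {poly R[i]}) != 0.
  by rewrite -polyC_natr polyC_eq0 pnatr_eq0 -lt0n (leq_trans _ k2).
have sD : (size (Sum^`()) < k.-1.+1)%N.
  have [HSe|HSn] := eqVneq Sum 0; first by rewrite HSe deriv0 size_poly0.
  rewrite prednK; last exact: leq_trans k2.
  exact: leq_trans (lt_size_deriv HSn) sS.
have s1 : size ((k%:R : {poly R[i]}) *: 'X^(k.-1) : {poly {poly R[i]}}) = k.-1.+1.
  by rewrite size_scale // size_polyXn.
have lD : lead_coef G^`() = k%:R.
  by rewrite dG lead_coefDl ?s1 // lead_coefZ lead_coefXn mulr1.
have Gz : forall z, map_poly (horner_eval z) G = p (F z).
  move=> z; rewrite Hp /G rmorphD rmorphXn /= map_polyX rmorph_sum; congr (_ + _).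
  apply: eq_bigr => j _; rewrite rmorphM rmorphXn /= map_polyX map_polyC /= HQ mul_polyC.
  by [].
have key : forall z, (resultant G G^`()).[z] = resultant (p (F z)) (p (F z))^`().
  move=> z; have E := @map_resultant _ _ (horner_eval z) G G^`().
  rewrite -deriv_map Gz in E; rewrite -[LHS]/(horner_eval z _) E //.
    by rewrite lG rmorph1 oner_eq0.
  by rewrite lD rmorph_nat pnatr_eq0 -lt0n (leq_trans _ k2).
have nz : forall z, p (F z) != 0.
  move=> z; rewrite -Gz -size_poly_eq0 size_map_poly_id0 ?sG //.
  by rewrite lG /horner_eval hornerC oner_eq0.
have rep : forall z, repeated_zeros p (F z) <-> root (resultant G G^`()) z.
  move=> z; rewrite /root key resultant_eq0 -rep_gcd //.
have [S0|Sn] := eqVneq (resultant G G^`()) 0.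
  left => z; split; first by case.
  by move=> Dz; split => //; apply/rep; rewrite S0 root0.
right; have [r Hr] := closed_field_poly_normal (resultant G G^`()).
exists r => z [_ /rep]; rewrite Hr rootZ ?lead_coef_eq0 //.
by rewrite root_prod_XsubC.
Qed.
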